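(* Let $F\colon\mathsf{Set}\to\mathsf{Set}$ preserve intersections and let $c\colon C\to FC$ be an $F$-coalgebra. Then $\ominus_c=\ominus_{\tau_C\cdot c}$ as operators on the set of subsets of $C$, where the right-hand side is computed for the power-set functor $\mathcal P$ and the canonical graph $\tau_C\cdot c\colon C\to\mathcal P C$.
   Context: On $\mathsf{Set}$ use the factorization system (surjective, injective); subobjects are subsets. $F$ preserves intersections means $F$ preserves injective maps and intersections (wide pullbacks of injective maps). For a functor $H$ preserving intersections and a map $f\colon X\to HY$, $\ominus_f(S)$ for $S\subseteq X$ is the least subset $Z\subseteq Y$ such that $f$ restricted to $S$ factors through $Hm\colon HZ\to HY$, $m$ the inclusion. $\mathcal P$ is the power-set functor. For each set $X$, $\tau_X\colon FX\to\mathcal P X$ is given by $\tau_X(t)=\{x\in X\mid t\notin Fi[F(X\setminus\{x\})]\}$ with $i\colon X\setminus\{x\}\hookrightarrow X$ the inclusion; $\tau_C\cdot c$ is the canonical graph of $(C,c)$. *)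

(* Defs.v *)
From Stdlib Require Import FunctionalExtensionality PropExtensionality.

Record SetFunctor := {
  Fob :> Type -> Type;
  Fmap : forall X Y : Type, (X -> Y) -> Fob X -> Fob Y;
  Fmap_id : forall (X : Type) (t : Fob X), Fmap X X (fun x => x) t = t;
  Fmap_comp : forall (X Y Z : Type) (f : X -> Y) (g : Y -> Z) (t : Fob X),
      Fmap Y Z g (Fmap X Y f t) = Fmap X Z (fun x => g (f x)) t
}.

Arguments Fmap s {X Y} f t.

Definition incl {X : Type} (S : X -> Prop) : {x : X | S x} -> X :=
  fun u => proj1_sig u.

Definition Fimg (F : SetFunctor) {X : Type} (S : X -> Prop) (t : F X) : Prop :=
  exists u : F {x : X | S x}, Fmap F (incl S) u = t.

Definition injective {A B : Type} (f : A -> B) : Prop :=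
  forall a a', f a = f a' -> a = a'.

Definition preserves_intersections (F : SetFunctor) : Prop :=
  (forall (X Y : Type) (m : X -> Y), injective m -> injective (Fmap F m)) /\
  (forall (X I : Type) (S : I -> X -> Prop) (t : F X),
      Fimg F (fun x => forall i, S i x) t <-> (forall i, Fimg F (S i) t)).

Definition factors_through (H : SetFunctor) {X Y : Type} (f : X -> H Y)
  (S : X -> Prop) (Z : Y -> Prop) : Prop :=
  forall x, S x -> Fimg H Z (f x).

Definition is_ominus (H : SetFunctor) {X Y : Type} (f : X -> H Y)
  (S : X -> Prop) (Z : Y -> Prop) : Prop :=
  factors_through H f S Z /\
  (forall Z' : Y -> Prop, factors_through H f S Z' -> forall y, Z y -> Z' y).

Definition pset_map {X Y : Type} (f : X -> Y) (A : X -> Prop) : Y -> Prop :=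
  fun y => exists x, A x /\ f x = y.

Lemma pset_map_id (X : Type) (A : X -> Prop) : pset_map (fun x => x) A = A.
Proof.
  apply functional_extensionality; intro y; apply propositional_extensionality.
  unfold pset_map; split; [intros [x [Hx <-]]; exact Hx | intro H; exists y; auto].
Qed.

Lemma pset_map_comp (X Y Z : Type) (f : X -> Y) (g : Y -> Z) (A : X -> Prop) :
  pset_map g (pset_map f A) = pset_map (fun x => g (f x)) A.
Proof.
  apply functional_extensionality; intro z; apply propositional_extensionality.
  unfold pset_map; split.
  - intros [y [[x [Hx <-]] <-]]; exists x; auto.
  - intros [x [Hx <-]]; exists (f x); split; [exists x; auto | reflexivity].
Qed.

Definition Pow : SetFunctor :=
  {| Fob := fun X => X -> Prop;
     Fmap := fun X Y f A => pset_map f A;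
     Fmap_id := pset_map_id;
     Fmap_comp := pset_map_comp |}.

Definition tau (F : SetFunctor) (X : Type) (t : F X) : Pow X :=
  fun x => ~ Fimg F (fun y => y <> x) t.

(* Main.v *)
Require Import Defs.
From Stdlib Require Import Classical FunctionalExtensionality PropExtensionality.

Lemma Fimg_mono (F : SetFunctor) {X : Type} (A B : X -> Prop) (t : F X) :
  (forall x, A x -> B x) -> Fimg F A t -> Fimg F B t.
Proof.
  intros H [u Hu].
  exists (Fmap F (fun v : {x : X | A x} => exist B (proj1_sig v) (H _ (proj2_sig v))) u).
  rewrite Fmap_comp. exact Hu.
Qed.

Lemma Fimg_tau (F : SetFunctor) (HF : preserves_intersections F) (X : Type) (t : F X) :
  Fimg F (tau F X t) t.
Proof.
  destruct HF as [_ HI].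
  assert (H : Fimg F (fun z => forall i : {y : X | ~ tau F X t y}, z <> proj1_sig i) t).
  { apply (proj2 (HI X {y : X | ~ tau F X t y}
                   (fun i z => z <> proj1_sig i) t)).
    intros [y Hy]; simpl. unfold tau in Hy. apply NNPP. exact Hy. }
  refine (Fimg_mono F _ _ t _ H).
  intros z Hz. apply NNPP. intro Hn. exact (Hz (exist _ z Hn) eq_refl).
Qed.

Theorem proposition5p16 (F : SetFunctor) (HF : preserves_intersections F)
  (C : Type) (c : C -> F C) :
  forall S : C -> Prop, exists Z : C -> Prop,
    is_ominus F c S Z /\ is_ominus Pow (fun x => tau F C (c x)) S Z.
Proof.
  intro S.
  set (I := {Z' : C -> Prop | factors_through F c S Z'}).
  exists (fun y => forall i : I, proj1_sig i y).
  assert (HZF : factors_through F c S (fun y => forall i : I, proj1_sig i y)).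
  { intros x Hx. apply (proj2 (proj2 HF C I (fun i => proj1_sig i) (c x))).
    intros [Z' HZ']. exact (HZ' x Hx). }
  split; [split|split].
  - exact HZF.
  - intros Z' HZ' y Hy. exact (Hy (exist _ Z' HZ')).
  - intros x Hx. simpl.
    exists (fun v : {y : C | forall i : I, proj1_sig i y} => tau F C (c x) (proj1_sig v)).
    apply functional_extensionality; intro y; apply propositional_extensionality.
    unfold pset_map, incl; split.
    + intros [v [Hv <-]]. exact Hv.
    + intro Hy. assert (Hz : forall i : I, proj1_sig i y).
      { intros [Z' HZ']; simpl. apply NNPP; intro Hn.
        apply Hy. apply (Fimg_mono F Z' _ _); [|exact (HZ' x Hx)].
        intros z Hz Heq; subst; contradiction. }
      exists (exist _ y Hz). simpl. auto.
  - intros Z' HZ' y Hy.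
    assert (Hf : factors_through F c S Z').
    { intros x Hx. apply (Fimg_mono F (tau F C (c x))); [|apply Fimg_tau; exact HF].
      intros z Hz. destruct (HZ' x Hx) as [u Hu]. simpl in Hu.
      rewrite <- Hu in Hz. destruct Hz as [v [_ <-]]. exact (proj2_sig v). }
    exact (Hy (exist _ Z' Hf)).
Qed.
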